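(* Let $Y$ be a Hausdorff space and $g:[0,1]\to Y$ a continuous surjection. The following are equivalent: (a) $g$ is arcwise increasing; (b) $g$ is hereditarily irreducible; (c) $g$ is strongly irreducible; (d) $g$ is almost injective.
   Context: For a continuous map $g:X\to Y$ between continua: $g$ is almost injective if $\{x: g^{-1}(g(x))=\{x\}\}$ is dense in $X$; irreducible if $g(K)\subsetneq g(X)$ for every proper subcontinuum $K\subsetneq X$; hereditarily irreducible if $g(A)\subsetneq g(B)$ for all subcontinua $A\subsetneq B$ of $X$; strongly irreducible if $g(A)\subsetneq g(X)$ for every closed $A\subsetneq X$; arcwise increasing if $g(A)\subsetneq g(B)$ for all arcs $A\subsetneq B$ in $X$. *)

(* Defs.v *)
From Stdlib Require Import Reals List.
Open Scope R_scope.

Definition subset {X : Type} (A B : X -> Prop) : Prop := forall x, A x -> B x.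
Definition psubset {X : Type} (A B : X -> Prop) : Prop :=
  subset A B /\ exists x, B x /\ ~ A x.
Definition image {X Y : Type} (f : X -> Y) (A : X -> Prop) : Y -> Prop :=
  fun y => exists x, A x /\ f x = y.
Definition fullset {X : Type} : X -> Prop := fun _ => True.

Definition is_topology {X : Type} (op : (X -> Prop) -> Prop) : Prop :=
  op (fun _ => True) /\
  (forall U V, op U -> op V -> op (fun x => U x /\ V x)) /\
  (forall F : (X -> Prop) -> Prop, (forall U, F U -> op U) ->
     op (fun x => exists U, F U /\ U x)).

Definition Hausdorff {X : Type} (op : (X -> Prop) -> Prop) : Prop :=
  forall x y, x <> y -> exists U V, op U /\ op V /\ U x /\ V y /\
    (forall z, ~ (U z /\ V z)).

Definition continuous {X Y : Type} (opX : (X -> Prop) -> Prop)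
  (opY : (Y -> Prop) -> Prop) (f : X -> Y) : Prop :=
  forall V, opY V -> opX (fun x => V (f x)).

Definition closed {X : Type} (op : (X -> Prop) -> Prop) (A : X -> Prop) : Prop :=
  op (fun x => ~ A x).

Definition dense {X : Type} (op : (X -> Prop) -> Prop) (D : X -> Prop) : Prop :=
  forall U, op U -> (exists x, U x) -> exists x, U x /\ D x.

Definition compact {X : Type} (op : (X -> Prop) -> Prop) (A : X -> Prop) : Prop :=
  forall F : (X -> Prop) -> Prop, (forall U, F U -> op U) ->
    subset A (fun x => exists U, F U /\ U x) ->
    exists l : list (X -> Prop), (forall U, In U l -> F U) /\
      subset A (fun x => exists U, In U l /\ U x).

Definition connected {X : Type} (op : (X -> Prop) -> Prop) (A : X -> Prop) : Prop :=
  ~ exists U V, op U /\ op V /\ subset A (fun x => U x \/ V x) /\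
      (forall x, A x -> U x -> V x -> False) /\
      (exists x, A x /\ U x) /\ (exists x, A x /\ V x).

Definition subcontinuum {X : Type} (op : (X -> Prop) -> Prop) (A : X -> Prop) : Prop :=
  (exists x, A x) /\ compact op A /\ connected op A.

Definition I01 : Type := { x : R | 0 <= x <= 1 }.
Definition I01_open (U : I01 -> Prop) : Prop :=
  forall x, U x -> exists eps, eps > 0 /\
    forall y : I01, Rabs (proj1_sig y - proj1_sig x) < eps -> U y.

(* an arc: a subset homeomorphic to [0,1] (h is a homeomorphism onto A,
   A carrying the subspace topology) *)
Definition arc {X : Type} (op : (X -> Prop) -> Prop) (A : X -> Prop) : Prop :=
  exists h : I01 -> X,
    continuous I01_open op h /\
    (forall s t, h s = h t -> s = t) /\
    (forall y, A y <-> exists t, h t = y) /\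
    (forall U, I01_open U -> exists V, op V /\
        forall y, (A y /\ V y) <-> exists t, U t /\ h t = y).

Definition almost_injective {X Y : Type} (opX : (X -> Prop) -> Prop) (g : X -> Y) : Prop :=
  dense opX (fun x => forall x', g x' = g x -> x' = x).

Definition hereditarily_irreducible {X Y : Type} (opX : (X -> Prop) -> Prop)
  (g : X -> Y) : Prop :=
  forall A B, subcontinuum opX A -> subcontinuum opX B -> psubset A B ->
    psubset (image g A) (image g B).

Definition strongly_irreducible {X Y : Type} (opX : (X -> Prop) -> Prop)
  (g : X -> Y) : Prop :=
  forall A, closed opX A -> psubset A fullset ->
    psubset (image g A) (image g fullset).

Definition arcwise_increasing {X Y : Type} (opX : (X -> Prop) -> Prop)
  (g : X -> Y) : Prop :=
  forall A B, arc opX A -> arc opX B -> psubset A B ->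
    psubset (image g A) (image g B).

(* Main.v *)
Require Import Defs.
From Stdlib Require Import Reals List Lra Classical ClassicalEpsilon FunctionalExtensionality PropExtensionality.
Require Import Defs.
Open Scope R_scope.

Lemma pred_ext {X} (P Q : X -> Prop) : (forall x, P x <-> Q x) -> P = Q.
Proof. intro H. apply functional_extensionality; intro x; apply propositional_extensionality; auto. Qed.

Lemma op_ext {X} (op : (X->Prop)->Prop) (P Q : X -> Prop) : op P -> (forall x, P x <-> Q x) -> op Q.
Proof. intros H E. rewrite <- (pred_ext P Q E); exact H. Qed.

Lemma I01_eq (s t : I01) : proj1_sig s = proj1_sig t -> s = t.
Proof. destruct s as [s Hs], t as [t Ht]; simpl; intro E; subst; f_equal; apply proof_irrelevance. Qed.

Lemma I01b (t : I01) : 0 <= proj1_sig t <= 1.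
Proof. exact (proj2_sig t). Qed.

Lemma compact_closed {X} (op : (X->Prop)->Prop) : is_topology op -> Hausdorff op ->
  forall A, compact op A -> closed op A.
Proof.
 intros [Ht [Hi Hu]] HH A HA. unfold closed.
 apply op_ext with (P := fun x => exists W, (op W /\ forall z, W z -> ~ A z) /\ W x).
 - apply Hu. intros W [HW _]; exact HW.
 - intro x; split.
   + intros [W [[_ HW] Wx]]. apply HW; exact Wx.
   + intro nAx.
     set (F := fun U => op U /\ exists V, op V /\ V x /\ forall z, ~(U z /\ V z)).
     destruct (HA F) as [l [Hl Hcov]].
     * intros U [HU _]; exact HU.
     * intros a Aa. assert (a <> x) by (intro; subst; contradiction).
       destruct (HH a x H) as [U [V [HU [HV [Ua [Vx Hd]]]]]].
       exists U; split; [split; [exact HU| exists V; auto] | exact Ua].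
     * assert (Hw : exists W, op W /\ W x /\ forall U, In U l -> forall z, ~(U z /\ W z)).
       { clear Hcov. induction l as [|U l IH].
         - exists (fun _ => True). split; [exact Ht|split; [exact I| intros U []]].
         - destruct IH as [W [HW [Wx HWd]]]. intros U' HU'; apply Hl; right; auto.
           destruct (Hl U (or_introl eq_refl)) as [_ [V [HV [Vx HVd]]]].
           exists (fun z => W z /\ V z). split; [apply Hi; auto| split; [auto|]].
           intros U' [<-|HU'] z [H1 [H2 H3]].
           + apply (HVd z); auto.
           + apply (HWd U' HU' z); auto. }
       destruct Hw as [W [HW [Wx HWd]]].
       exists W; split; [split; [exact HW|] | exact Wx].
       intros z Wz Az. destruct (Hcov z Az) as [U [HU Uz]]. apply (HWd U HU z); auto.
Qed.

Lemma compact_image {X Y} opX opY (f: X->Y) A : continuous opX opY f -> compact opX A ->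
  compact opY (image f A).
Proof.
 intros Hc HA F HF Hcov.
 set (G := fun W : X -> Prop => exists U, F U /\ W = (fun x => U (f x))).
 destruct (HA G) as [l [Hl Hlc]].
 - intros W [U [HU ->]]. apply Hc, HF, HU.
 - intros x Ax. destruct (Hcov (f x)) as [U [HU Ux]]. exists x; auto.
   exists (fun x => U (f x)); split; [exists U; auto | exact Ux].
 - assert (H : exists l', (forall U, In U l' -> F U) /\
       forall W, In W l -> forall x, W x -> exists U, In U l' /\ U (f x)).
   { clear Hlc. induction l as [|W l IH].
     - exists nil; split; [intros U []| intros W []].
     - destruct IH as [l' [H1 H2]]. intros U HU; apply Hl; right; auto.
       destruct (Hl W (or_introl eq_refl)) as [U [HU EW]].
       exists (U :: l'); split.
       + intros U' [<-|HU']; auto.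
       + intros W' [<-|HW'] x Wx.
         * exists U; split; [left; auto| rewrite EW in Wx; exact Wx].
         * destruct (H2 W' HW' x Wx) as [U' [? ?]]. exists U'; split; [right|]; auto. }
   destruct H as [l' [H1 H2]]. exists l'; split; auto.
   intros y [x [Ax <-]]. destruct (Hlc x Ax) as [W [HW Wx]]. eauto.
Qed.

Lemma I01_top : is_topology I01_open.
Proof.
 split; [|split].
 - intros x _. exists 1; split; [lra| auto].
 - intros U V HU HV x [Ux Vx].
   destruct (HU x Ux) as [e1 [He1 H1]], (HV x Vx) as [e2 [He2 H2]].
   exists (Rmin e1 e2); split; [apply Rmin_glb_lt; auto|].
   intros y Hy; split; [apply H1|apply H2]; eapply Rlt_le_trans; eauto;
   [apply Rmin_l|apply Rmin_r].
 - intros F HF x [U [FU Ux]]. destruct (HF U FU x Ux) as [e [He H]].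
   exists e; split; auto. intros y Hy; exists U; auto.
Qed.

Lemma ball_open (x : I01) r : I01_open (fun y => Rabs (proj1_sig y - proj1_sig x) < r).
Proof.
 intros z Hz. exists (r - Rabs (proj1_sig z - proj1_sig x)); split; [lra|].
 intros y Hy. revert Hz Hy. split_Rabs; lra.
Qed.

Lemma I01_haus : Hausdorff I01_open.
Proof.
 intros x y Hxy. assert (proj1_sig x <> proj1_sig y) by (intro E; apply Hxy, I01_eq, E).
 set (d := Rabs (proj1_sig x - proj1_sig y) / 2).
 assert (Hd : 0 < d) by (unfold d; split_Rabs; lra).
 exists (fun z => Rabs (proj1_sig z - proj1_sig x) < d), (fun z => Rabs (proj1_sig z - proj1_sig y) < d).
 split; [apply ball_open|split; [apply ball_open|]].
 split; [rewrite Rminus_diag, Rabs_R0; auto|split; [rewrite Rminus_diag, Rabs_R0; auto|]].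
 intros z [H1 H2]. unfold d in *. revert H1 H2. split_Rabs; lra.
Qed.
Definition mk (r : R) (H : 0 <= r <= 1) : I01 := exist _ r H.

Lemma exists_gt_lub (S : R -> Prop) s e : is_lub S s -> 0 < e -> exists t, S t /\ t > s - e.
Proof.
 intros [Hub Hl] He. apply NNPP; intro N.
 assert (s <= s - e); [|lra]. apply Hl. intros t St.
 apply Rnot_lt_le. intro. apply N. exists t; split; auto.
Qed.

Lemma heine_borel (A : I01 -> Prop) : closed I01_open A -> compact I01_open A.
Proof.
 intros HA F HF Hcov.
 set (S := fun t => 0 <= t <= 1 /\ exists l, (forall U, In U l -> F U) /\
     forall x : I01, A x -> proj1_sig x <= t -> exists U, In U l /\ U x).
 assert (S0 : S 0).
 { split; [lra|]. assert (H0 : 0 <= 0 <= 1) by lra.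
   destruct (classic (A (mk 0 H0))) as [Az|Naz].
   - destruct (Hcov _ Az) as [U [FU Uz]]. exists (U :: nil). split.
     + intros U' [<-|[]]; auto.
     + intros x Ax Hx. exists U; split; [left; auto|].
       replace x with (mk 0 H0); auto. apply I01_eq; simpl. pose proof (I01b x); lra.
   - exists nil; split; [intros U []|]. intros x Ax Hx. exfalso; apply Naz.
     replace (mk 0 H0) with x; auto. apply I01_eq; simpl. pose proof (I01b x); lra. }
 destruct (completeness S) as [s Hs].
 { exists 1. intros t [? _]; lra. }
 { exists 0; auto. }
 assert (Hs01 : 0 <= s <= 1).
 { destruct Hs as [Hub Hl]. split; [apply Hub; auto|]. apply Hl. intros t [? _]; lra. }
 assert (Hloc : exists e, 0 < e /\ exists l0, (forall U, In U l0 -> F U) /\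
     forall x : I01, A x -> Rabs (proj1_sig x - s) < e -> exists U, In U l0 /\ U x).
 { destruct (classic (A (mk s Hs01))) as [As|Nas].
   - destruct (Hcov _ As) as [U [FU Us]]. destruct (HF U FU _ Us) as [e [He HU]].
     exists e; split; auto. exists (U :: nil); split; [intros U' [<-|[]]; auto|].
     intros x Ax Hx. exists U; split; [left; auto| apply HU; exact Hx].
   - destruct (HA _ Nas) as [e [He HU]]. exists e; split; auto. exists nil; split; [intros U []|].
     intros x Ax Hx. exfalso. apply (HU x Hx Ax). }
 destruct Hloc as [e [He [l0 [Hl0 Hc0]]]].
 destruct (exists_gt_lub S s e Hs He) as [t [[Ht [l [Hl Hc]]] Hts]].
 assert (Sm : S (Rmin (s + e/2) 1)).
 { split. { unfold Rmin; destruct (Rle_dec (s+e/2) 1); lra. }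
   exists (l0 ++ l); split.
   - intros U HU. apply in_app_or in HU. destruct HU; auto.
   - intros x Ax Hx. destruct (Rle_lt_dec (proj1_sig x) t).
     + destruct (Hc x Ax r) as [U [? ?]]. exists U; split; auto. apply in_or_app; auto.
     + assert (Rabs (proj1_sig x - s) < e).
       { assert (proj1_sig x <= s + e/2) by (eapply Rle_trans; [exact Hx|apply Rmin_l]).
         split_Rabs; lra. }
       destruct (Hc0 x Ax H) as [U [? ?]]. exists U; split; auto. apply in_or_app; auto. }
 assert (Hm : Rmin (s + e/2) 1 <= s) by (apply (proj1 Hs); exact Sm).
 assert (E1 : Rmin (s + e/2) 1 = 1).
 { revert Hm. unfold Rmin; destruct (Rle_dec (s+e/2) 1); lra. }
 rewrite E1 in Sm. destruct Sm as [_ [l' [Hl' Hc']]]. exists l'; split; auto.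
 intros x Ax. apply Hc'; auto. apply I01b.
Qed.

Lemma full_closed : closed I01_open (@fullset I01).
Proof. intros x Hx. exfalso; apply Hx; exact I. Qed.

Lemma I01_conn_aux (U V : I01 -> Prop) u v : I01_open U -> I01_open V ->
  (forall x, U x \/ V x) -> (forall x, U x -> V x -> False) -> U u -> V v ->
  proj1_sig u < proj1_sig v -> False.
Proof.
 intros HU HV Hc Hd Uu Vv Huv.
 set (S := fun t => proj1_sig u <= t <= proj1_sig v /\
   forall x : I01, proj1_sig u <= proj1_sig x <= t -> U x).
 destruct (completeness S) as [s Hs].
 { exists (proj1_sig v). intros t [? _]; lra. }
 { exists (proj1_sig u). split; [lra|]. intros x Hx. replace x with u; auto. apply I01_eq; lra. }
 pose proof (I01b u); pose proof (I01b v).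
 assert (Hsb : proj1_sig u <= s <= proj1_sig v).
 { destruct Hs as [Hub Hl]. split.
   - apply Hub. split; [lra|]. intros x Hx. replace x with u; auto. apply I01_eq; lra.
   - apply Hl. intros t [? _]; lra. }
 assert (Hs01 : 0 <= s <= 1) by lra.
 assert (Hcl : forall x : I01, proj1_sig u <= proj1_sig x < s -> U x).
 { intros x Hx. destruct (exists_gt_lub S s (s - proj1_sig x) Hs) as [t [[_ Ht] Hts]]; [lra|].
   apply Ht; lra. }
 destruct (Hc (mk s Hs01)) as [Us|Vs].
 - assert (s < proj1_sig v).
   { destruct (Rle_lt_dec (proj1_sig v) s); auto. exfalso. apply (Hd v); auto.
     replace v with (mk s Hs01); auto. apply I01_eq; simpl; lra. }
   destruct (HU _ Us) as [e [He HE]]. simpl in HE.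
   assert (St : S (Rmin (s + e/2) (proj1_sig v))).
   { split. { unfold Rmin; destruct (Rle_dec (s+e/2) (proj1_sig v)); lra. }
     intros x Hx. destruct (Rlt_le_dec (proj1_sig x) s).
     - apply Hcl; lra.
     - apply HE. assert (proj1_sig x <= s + e/2) by (eapply Rle_trans; [apply Hx|apply Rmin_l]).
       split_Rabs; lra. }
   pose proof (proj1 Hs _ St). revert H2. unfold Rmin; destruct (Rle_dec (s+e/2) (proj1_sig v)); lra.
 - assert (proj1_sig u < s).
   { destruct (Rle_lt_dec s (proj1_sig u)); auto. exfalso. apply (Hd u); auto.
     replace u with (mk s Hs01); auto. apply I01_eq; simpl; lra. }
   destruct (HV _ Vs) as [e [He HE]]. simpl in HE.
   set (r := Rmax (s - e/2) (proj1_sig u)).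
   assert (Hr : 0 <= r <= 1) by (unfold r, Rmax; destruct (Rle_dec (s-e/2) (proj1_sig u)); lra).
   apply (Hd (mk r Hr)).
   + apply Hcl; simpl; unfold r, Rmax; destruct (Rle_dec (s-e/2) (proj1_sig u)); lra.
   + apply HE; simpl; unfold r, Rmax; destruct (Rle_dec (s-e/2) (proj1_sig u)); split_Rabs; lra.
Qed.

Lemma I01_conn : connected I01_open (@fullset I01).
Proof.
 intros [U [V [HU [HV [Hc [Hd [[u [_ Uu]] [v [_ Vv]]]]]]]]].
 assert (Hc' : forall x, U x \/ V x) by (intro x; apply Hc; exact I).
 assert (Hd' : forall x, U x -> V x -> False) by (intro x; apply Hd; exact I).
 destruct (Rtotal_order (proj1_sig u) (proj1_sig v)) as [H|[H|H]].
 - eapply (I01_conn_aux U V u v); eauto.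
 - apply (Hd' u); auto. replace u with v; auto. apply I01_eq; auto.
 - eapply (I01_conn_aux V U v u); eauto. intro x; destruct (Hc' x); auto.
Qed.

Lemma conn_image {Y} (op : (Y->Prop)->Prop) (h : I01 -> Y) :
  continuous I01_open op h -> connected op (image h fullset).
Proof.
 intros Hh [U [V [HU [HV [Hc [Hd [[y1 [[t1 [_ E1]] U1]] [y2 [[t2 [_ E2]] V2]]]]]]]]].
 apply I01_conn. exists (fun t => U (h t)), (fun t => V (h t)).
 split; [apply Hh; auto|split; [apply Hh; auto|]].
 split; [intros t _; apply Hc; exists t; split; [exact I|auto]|].
 split; [intros t _; apply Hd; exists t; split; [exact I|auto]|].
 split; [exists t1; subst; split; [exact I|auto] | exists t2; subst; split; [exact I|auto]].
Qed.

Lemma arc_subcont {Y} (op : (Y->Prop)->Prop) A : arc op A -> subcontinuum op A.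
Proof.
 intros [h [Hh [_ [HA _]]]].
 assert (E : A = image h fullset).
 { apply pred_ext; intro y; rewrite HA; split.
   - intros [t Ht]; exists t; split; [exact I|auto].
   - intros [t [_ Ht]]; exists t; auto. }
 subst A. split; [|split].
 - assert (H0 : 0 <= 0 <= 1) by lra. exists (h (mk 0 H0)), (mk 0 H0); split; [exact I|auto].
 - apply (compact_image I01_open); auto. apply heine_borel, full_closed.
 - apply conn_image; auto.
Qed.
Definition Iv (a b : R) : I01 -> Prop := fun t => a <= proj1_sig t <= b.

Lemma div_unit x a b : a < b -> a <= x <= b -> 0 <= (x-a)/(b-a) <= 1.
Proof. intros H1 H2. set (w := (x-a)/(b-a)). assert (w * (b - a) = x - a) by (unfold w; field; lra). nra. Qed.

Lemma arc_interval a b : 0 <= a -> a < b -> b <= 1 -> arc I01_open (Iv a b).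
Proof.
 intros Ha Hab Hb.
 assert (Hh : forall t : I01, 0 <= a + proj1_sig t * (b - a) <= 1).
 { intros [t Ht]; simpl; nra. }
 set (h := fun t : I01 => exist (fun x => 0 <= x <= 1) _ (Hh t) : I01).
 assert (hv : forall t, proj1_sig (h t) = a + proj1_sig t * (b - a)) by reflexivity.
 exists h. split; [|split; [|split]].
 - intros V HV x Vx. destruct (HV _ Vx) as [e [He HE]].
   exists (e / (b - a)); split; [apply Rdiv_lt_0_compat; lra|].
   intros y Hy. apply HE. rewrite !hv.
   set (d := e / (b - a)) in *. assert (d * (b - a) = e) by (unfold d; field; lra).
   revert Hy. split_Rabs; nra.
 - intros s t E. apply I01_eq. assert (proj1_sig (h s) = proj1_sig (h t)) by (rewrite E; auto).
   rewrite !hv in H. apply Rmult_eq_reg_r with (b - a); lra.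
 - intro y; split.
   + intros [H1 H2].
     assert (Ht : 0 <= (proj1_sig y - a) / (b - a) <= 1)
     by (apply div_unit; lra).
     exists (mk _ Ht). apply I01_eq. rewrite hv; simpl. field; lra.
   + intros [t <-]. unfold Iv. rewrite hv. pose proof (I01b t); nra.
 - intros U HU. exists (fun y => proj1_sig y < a \/ b < proj1_sig y \/ exists t, U t /\ h t = y).
   split.
   + intros y [Hy|[Hy|[t [Ut <-]]]].
     * exists (a - proj1_sig y); split; [lra|]. intros z Hz; left. revert Hz; split_Rabs; lra.
     * exists (proj1_sig y - b); split; [lra|]. intros z Hz; right; left. revert Hz; split_Rabs; lra.
     * destruct (HU t Ut) as [e [He HE]]. exists (e * (b - a)); split; [nra|].
       intros z Hz. rewrite hv in Hz.
       destruct (Rlt_le_dec (proj1_sig z) a); [left; auto|].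
       destruct (Rlt_le_dec b (proj1_sig z)); [right; left; auto|].
       right; right.
       assert (Ht : 0 <= (proj1_sig z - a) / (b - a) <= 1)
       by (apply div_unit; lra).
       exists (mk _ Ht). split.
       -- apply HE. simpl. set (w := (proj1_sig z - a) / (b - a)).
          assert (w * (b - a) = proj1_sig z - a) by (unfold w; field; lra).
          revert Hz. split_Rabs; nra.
       -- apply I01_eq. rewrite hv; simpl. field; lra.
   + intro y; split.
     * intros [[H1 H2] [H|[H|H]]]; auto; lra.
     * intros [t [Ut <-]]. split.
       -- unfold Iv. rewrite hv. pose proof (I01b t); nra.
       -- right; right; eauto.
Qed.

Lemma conn_between (B : I01 -> Prop) x y z : connected I01_open B -> B x -> B y ->
  proj1_sig x <= proj1_sig z <= proj1_sig y -> B z.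
Proof.
 intros HB Bx By Hz. apply NNPP; intro Nz. apply HB.
 assert (Hne : forall t, B t -> proj1_sig t <> proj1_sig z).
 { intros t Bt E. apply Nz. replace z with t; auto. apply I01_eq; auto. }
 exists (fun t => proj1_sig t < proj1_sig z), (fun t => proj1_sig z < proj1_sig t).
 split; [|split; [|split; [|split; [|split]]]].
 - intros t Ht. exists (proj1_sig z - proj1_sig t); split; [lra|]. intros w Hw. revert Hw; split_Rabs; lra.
 - intros t Ht. exists (proj1_sig t - proj1_sig z); split; [lra|]. intros w Hw. revert Hw; split_Rabs; lra.
 - intros t Bt. pose proof (Hne t Bt). destruct (Rtotal_order (proj1_sig t) (proj1_sig z)) as [?|[?|?]]; auto; contradiction.
 - intros t _ H1 H2; lra.
 - exists x; split; auto. pose proof (Hne x Bx); lra.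
 - exists y; split; auto. pose proof (Hne y By); lra.
Qed.

Lemma baire (C : nat -> I01 -> Prop) p q : (forall n, closed I01_open (C n)) ->
  0 <= p -> p < q -> q <= 1 ->
  (forall x : I01, p <= proj1_sig x <= q -> exists n, C n x) ->
  exists n c d, p <= c /\ c < d /\ d <= q /\ forall x : I01, c <= proj1_sig x <= d -> C n x.
Proof.
 intros HC Hp Hpq Hq Hcov. apply NNPP; intro N.
 assert (Hstep : forall n (ab : R * R), exists ab' : R * R,
   p <= fst ab < snd ab /\ snd ab <= q ->
   fst ab <= fst ab' /\ fst ab' < snd ab' /\ snd ab' <= snd ab /\
   forall x : I01, fst ab' <= proj1_sig x <= snd ab' -> ~ C n x).
 { intros n [c d]; simpl.
   destruct (classic (p <= c < d /\ d <= q)) as [Hcd|Hcd]; [|exists (0,0); tauto].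
   assert (Hx : exists x : I01, c <= proj1_sig x <= d /\ ~ C n x).
   { apply NNPP; intro M. apply N. exists n, c, d. split; [lra|split; [lra|split; [lra|]]].
     intros x Hx. apply NNPP; intro Nx. apply M; eauto. }
   destruct Hx as [x [Hx Nx]]. destruct (HC n x Nx) as [e [He HE]].
   exists (Rmax c (proj1_sig x - e/2), Rmin d (proj1_sig x + e/2)); simpl; intros _.
   unfold Rmax, Rmin; destruct (Rle_dec c (proj1_sig x - e/2));
     destruct (Rle_dec d (proj1_sig x + e/2));
   (split; [lra|split; [lra|split; [lra|]]]);
   intros y Hy; apply HE; split_Rabs; lra. }
 set (f := fun n ab => proj1_sig (constructive_indefinite_description _ (Hstep n ab))).
 assert (Hf : forall n ab, p <= fst ab < snd ab /\ snd ab <= q ->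
   fst ab <= fst (f n ab) /\ fst (f n ab) < snd (f n ab) /\ snd (f n ab) <= snd ab /\
   forall x : I01, fst (f n ab) <= proj1_sig x <= snd (f n ab) -> ~ C n x).
 { intros n ab. unfold f. destruct (constructive_indefinite_description _ _) as [ab' H]; simpl; auto. }
 clearbody f.
 set (iv := fix iv (k : nat) : R * R := match k with O => (p, q) | S k => f k (iv k) end).
 assert (Inv : forall k, p <= fst (iv k) < snd (iv k) /\ snd (iv k) <= q).
 { induction k as [|k IH]; simpl; [lra|]. destruct (Hf k _ IH) as [? [? [? _]]]. lra. }
 assert (Mono : forall k m : nat, fst (iv k) <= fst (iv (k + m)%nat) /\ snd (iv (k + m)%nat) <= snd (iv k)).
 { intros k m; induction m as [|m IH].
   - rewrite Nat.add_0_r; lra.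
   - rewrite Nat.add_succ_r. simpl. destruct (Hf (k+m)%nat _ (Inv (k+m)%nat)) as [? [? [? _]]]. lra. }
 assert (Hab : forall k j, fst (iv k) <= snd (iv j)).
 { intros k j. destruct (Mono k j) as [H1 _]. destruct (Mono j k) as [_ H2].
   rewrite Nat.add_comm in H2. pose proof (Inv (k + j)%nat). lra. }
 destruct (completeness (fun r => exists k, r = fst (iv k))) as [s [Hub Hl]].
 { exists q. intros r [k ->]. pose proof (Inv k); lra. }
 { exists p. exists O. reflexivity. }
 assert (Hs : forall k, fst (iv k) <= s <= snd (iv k)).
 { intro k. split; [apply Hub; eauto|]. apply Hl. intros r [j ->]. apply Hab. }
 assert (Hs01 : 0 <= s <= 1) by (pose proof (Hs O); simpl in *; lra).
 destruct (Hcov (mk s Hs01)) as [n Cn]; [simpl; pose proof (Hs O); simpl in *; lra|].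
 pose proof (Hs (S n)) as HsS. simpl in HsS.
 destruct (Hf n _ (Inv n)) as [_ [_ [_ Hno]]]. apply (Hno (mk s Hs01)); auto.
Qed.
Lemma d_to_c {Y} (g : I01 -> Y) : almost_injective I01_open g -> strongly_irreducible I01_open g.
Proof.
 intros Hd A HA [_ [x0 [_ Nx0]]].
 split; [intros y [x [_ <-]]; exists x; split; [exact I|auto]|].
 destruct (Hd _ HA (ex_intro _ x0 Nx0)) as [x [Nx Hx]].
 exists (g x); split; [exists x; split; [exact I| auto]|].
 intros [a [Aa Ea]]. apply Nx. rewrite <- (Hx a Ea); auto.
Qed.

Lemma open_interval c d : I01_open (fun t => c < proj1_sig t < d).
Proof.
 intros t Ht. exists (Rmin (proj1_sig t - c) (d - proj1_sig t)); split.
 - apply Rmin_glb_lt; lra.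
 - intros y Hy. revert Hy. unfold Rmin; destruct (Rle_dec (proj1_sig t - c) (d - proj1_sig t)); split_Rabs; lra.
Qed.

Lemma closed_compl_interval c d : closed I01_open (fun t => ~ (c < proj1_sig t < d)).
Proof. unfold closed. apply (op_ext _ (fun t => c < proj1_sig t < d)); [apply open_interval|]. intro x; simpl; split; [auto|apply NNPP]. Qed.

Lemma c_to_b {Y} (g : I01 -> Y) : strongly_irreducible I01_open g -> hereditarily_irreducible I01_open g.
Proof.
 intros Hc A B [[a0 Aa0] [cA _]] [_ [_ cB]] [Hsub [x [Bx Nx]]].
 split; [intros y [t [At <-]]; exists t; auto|].
 pose proof (compact_closed _ I01_top I01_haus A cA) as HAcl.
 destruct (HAcl x Nx) as [e [He HE]].
 assert (Hint : exists c d, 0 <= c < d /\ d <= 1 /\ forall t : I01, c < proj1_sig t < d -> B t /\ ~ A t).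
 { assert (Hne : proj1_sig a0 <> proj1_sig x).
   { intro E. apply Nx. replace x with a0; auto. apply I01_eq; auto. }
   pose proof (I01b a0); pose proof (I01b x).
   destruct (Rtotal_order (proj1_sig a0) (proj1_sig x)) as [Hlt|[Heq|Hgt]]; [|contradiction|].
   - exists (Rmax (proj1_sig x - e) (proj1_sig a0)), (proj1_sig x).
     split; [unfold Rmax; destruct (Rle_dec (proj1_sig x - e) (proj1_sig a0)); lra|split; [lra|]].
     intros t Ht. revert Ht; unfold Rmax; destruct (Rle_dec (proj1_sig x - e) (proj1_sig a0)); intro Ht;
     (split; [apply (conn_between B a0 x t cB (Hsub _ Aa0) Bx); lra|apply HE; split_Rabs; lra]).
   - exists (proj1_sig x), (Rmin (proj1_sig x + e) (proj1_sig a0)).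
     split; [unfold Rmin; destruct (Rle_dec (proj1_sig x + e) (proj1_sig a0)); lra|].
     split; [unfold Rmin; destruct (Rle_dec (proj1_sig x + e) (proj1_sig a0)); lra|].
     intros t Ht. revert Ht; unfold Rmin; destruct (Rle_dec (proj1_sig x + e) (proj1_sig a0)); intro Ht;
     (split; [apply (conn_between B x a0 t cB Bx (Hsub _ Aa0)); lra|apply HE; split_Rabs; lra]). }
 destruct Hint as [c [d [Hcd [Hd1 HW]]]].
 assert (Hm : 0 <= (c + d)/2 <= 1) by lra.
 destruct (Hc _ (closed_compl_interval c d)) as [_ [y [[t [_ <-]] Ny]]].
 { split; [intros z _; exact I|]. exists (mk _ Hm); split; [exact I|]. simpl; intro N; apply N; lra. }
 assert (Wt : c < proj1_sig t < d).
 { apply NNPP; intro N. apply Ny. exists t; auto. }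
 exists (g t); split.
 - exists t; split; [apply HW; auto|auto].
 - intros [a [Aa Ea]]. apply Ny. exists a; split; auto. intro Wa. apply (proj2 (HW a Wa)); auto.
Qed.

Lemma b_to_a {Y} (g : I01 -> Y) : hereditarily_irreducible I01_open g -> arcwise_increasing I01_open g.
Proof. intros Hb A B HA HB Hs. apply Hb; auto using arc_subcont. Qed.

Lemma closed_le A c : closed I01_open A -> closed I01_open (fun t => A t /\ proj1_sig t <= c).
Proof.
 intros HA t Ht. destruct (classic (A t)) as [At|Nt].
 - assert (proj1_sig t > c) by (apply Rnot_le_gt; intro; apply Ht; auto).
   exists (proj1_sig t - c); split; [lra|]. intros y Hy [_ Hy2]. revert Hy; split_Rabs; lra.
 - destruct (HA t Nt) as [e [He HE]]. exists e; split; auto. intros y Hy [Ay _]. exact (HE y Hy Ay).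
Qed.

Lemma closed_ge A c : closed I01_open A -> closed I01_open (fun t => A t /\ c <= proj1_sig t).
Proof.
 intros HA t Ht. destruct (classic (A t)) as [At|Nt].
 - assert (proj1_sig t < c) by (apply Rnot_le_gt; intro; apply Ht; auto).
   exists (c - proj1_sig t); split; [lra|]. intros y Hy [_ Hy2]. revert Hy; split_Rabs; lra.
 - destruct (HA t Nt) as [e [He HE]]. exists e; split; auto. intros y Hy [Ay _]. exact (HE y Hy Ay).
Qed.

Lemma closed_im {Y} (opY : (Y -> Prop) -> Prop) (hY : is_topology opY) (hH : Hausdorff opY)
  (g : I01 -> Y) (hg : continuous I01_open opY g) A :
  closed I01_open A -> closed opY (image g A).
Proof. intro HA. apply compact_closed; auto. apply (compact_image I01_open); auto. apply heine_borel; auto. Qed.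
Ltac rmm := unfold Rmax, Rmin in *;
  repeat match goal with
  | |- context [Rle_dec ?a ?b] => destruct (Rle_dec a b)
  | H : context [Rle_dec ?a ?b] |- _ => destruct (Rle_dec a b)
  end.

Lemma nbhd_interval (x : I01) e : 0 < e -> exists c d, 0 <= c /\ c < d /\ d <= 1 /\
  forall t : I01, c <= proj1_sig t <= d -> Rabs (proj1_sig t - proj1_sig x) < e.
Proof.
 intro He. pose proof (I01b x).
 exists (Rmax (proj1_sig x - e/2) 0), (Rmin (proj1_sig x + e/2) 1).
 rmm; (split; [lra|split; [lra|split; [lra|]]]); intros t Ht; split_Rabs; lra.
Qed.

Lemma a_to_c {Y} (opY : (Y -> Prop) -> Prop) (hY : is_topology opY) (hH : Hausdorff opY)
  (g : I01 -> Y) (hg : continuous I01_open opY g) :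
  arcwise_increasing I01_open g -> strongly_irreducible I01_open g.
Proof.
 intros Ha A HA [_ [x0 [_ Nx0]]].
 split; [intros y [x [_ <-]]; exists x; split; [exact I|auto]|].
 apply NNPP; intro Nall.
 assert (Hall : forall t, exists a, A a /\ g a = g t).
 { intro t. apply NNPP; intro N1. apply Nall. exists (g t). split; [exists t; split; [exact I|auto]|].
   intros [a [Aa Ea]]. apply N1; eauto. }
 destruct (HA x0 Nx0) as [e [He HE]].
 destruct (nbhd_interval x0 e He) as [c [d [Hc0 [Hcd [Hd1 Hin]]]]].
 assert (HnA : forall t : I01, c <= proj1_sig t <= d -> ~ A t) by (intros t Ht; apply HE, Hin, Ht).
 set (E1 := fun t => image g (fun a => A a /\ proj1_sig a <= c) (g t)).
 set (E2 := fun t => image g (fun a => A a /\ d <= proj1_sig a) (g t)).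
 assert (HE2cl : closed I01_open E2).
 { exact (hg _ (closed_im opY hY hH g hg _ (closed_ge A d HA))). }
 assert (Hcov : forall t : I01, c <= proj1_sig t <= d -> E1 t \/ E2 t).
 { intros t Ht. destruct (Hall t) as [a [Aa Ea]].
   destruct (Rle_lt_dec (proj1_sig a) c) as [H1|H1].
   - left. exists a; auto.
   - destruct (Rle_lt_dec d (proj1_sig a)) as [H2|H2].
     + right. exists a; auto.
     + exfalso. apply (HnA a); auto; lra. }
 destruct (classic (exists c' d', c <= c' /\ c' < d' /\ d' <= d /\
    forall t : I01, c' <= proj1_sig t <= d' -> E1 t)) as [[c' [d' [H1 [H2 [H3 H4]]]]]|No].
 - set (m := (c' + d')/2).
   assert (Hd' : 0 <= d' <= 1) by lra.
   destruct (Ha (Iv 0 m) (Iv 0 d')) as [_ [y [[t [Bt <-]] Ny]]].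
   + apply arc_interval; unfold m; lra.
   + apply arc_interval; lra.
   + split; [intros t [? ?]; split; unfold m in *; lra|].
     exists (mk d' Hd'); split; [unfold Iv; simpl; lra|unfold Iv, m; simpl; lra].
   + apply Ny. destruct (Rle_dec (proj1_sig t) m) as [Hm|Hm].
     * exists t; split; auto. split; [apply I01b|auto].
     * destruct (H4 t) as [a [[Aa Hac] Ea]]; [unfold Iv, m in *; lra|].
       exists a; split; auto. split; [apply I01b|unfold m; lra].
 - assert (HE2 : forall t : I01, c < proj1_sig t < d -> E2 t).
   { intros t Ht. apply NNPP; intro N2. destruct (HE2cl t N2) as [e2 [He2 HE2']].
     apply No. exists (Rmax c (proj1_sig t - e2/2)), (Rmin d (proj1_sig t + e2/2)).
     split; [rmm; lra|split; [rmm; lra|split; [rmm; lra|]]].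
     intros z Hz. destruct (Hcov z) as [?|HH]; [rmm; lra|auto|].
     exfalso. apply (HE2' z); auto. rmm; split_Rabs; lra. }
   set (c'' := c + (d - c)/3). set (d'' := c + 2*(d - c)/3).
   assert (Hc'' : 0 <= c'' <= 1) by (unfold c''; lra).
   destruct (Ha (Iv d'' 1) (Iv c'' 1)) as [_ [y [[t [Bt <-]] Ny]]].
   + apply arc_interval; unfold d''; lra.
   + apply arc_interval; unfold c''; lra.
   + split; [intros t [? ?]; split; unfold c'', d'' in *; lra|].
     exists (mk c'' Hc''); split; [unfold Iv; simpl; lra|unfold Iv, c'', d''; simpl; lra].
   + apply Ny. destruct (Rle_dec d'' (proj1_sig t)) as [Hm|Hm].
     * exists t; split; auto. split; [auto|apply I01b].
     * destruct (HE2 t) as [a [[Aa Hac] Ea]]; [unfold Iv, c'', d'' in *; lra|].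
       exists a; split; auto. split; [unfold d''; lra|apply I01b].
Qed.
Lemma c_to_d {Y} (opY : (Y -> Prop) -> Prop) (hY : is_topology opY) (hH : Hausdorff opY)
  (g : I01 -> Y) (hg : continuous I01_open opY g) :
  strongly_irreducible I01_open g -> almost_injective I01_open g.
Proof.
 intros Hc U HU [u Uu]. apply NNPP; intro Nd.
 assert (Htw : forall x, U x -> exists y, g y = g x /\ y <> x).
 { intros x Ux. apply NNPP; intro N1. apply Nd. exists x; split; auto.
   intros x' E. apply NNPP; intro N2. apply N1. eauto. }
 destruct (HU u Uu) as [e [He HE]].
 destruct (nbhd_interval u e He) as [p [q [Hp0 [Hpq [Hq1 Hin]]]]].
 set (F := fun (n : nat) (x : I01) => exists y, g y = g x /\
        Rabs (proj1_sig y - proj1_sig x) >= / INR (S n)).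
 set (C := fun n (x : I01) => forall V, I01_open V -> V x -> exists z, V z /\ F n z).
 assert (HC : forall n, closed I01_open (C n)).
 { intros n x Nx.
   assert (HV : exists V, I01_open V /\ V x /\ forall z, V z -> ~ F n z).
   { apply NNPP; intro M; apply Nx; intros V HV Vx. apply NNPP; intro M2; apply M.
     exists V; split; [auto|split; [auto|]]. intros z Vz Fz; apply M2; eauto. }
   destruct HV as [V [HV [Vx HVF]]]. destruct (HV x Vx) as [e' [He' HE']].
   exists e'; split; auto. intros y Hy Cy. destruct (Cy V HV (HE' y Hy)) as [z [Vz Fz]].
   exact (HVF z Vz Fz). }
 destruct (baire C p q HC Hp0 Hpq Hq1) as [n [c [d [Hc1 [Hcd [Hd1 HCn]]]]]].
 { intros t Ht. destruct (Htw t (HE t (Hin t Ht))) as [y [Ey Ny]].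
   assert (Hr : 0 < Rabs (proj1_sig y - proj1_sig t)).
   { assert (proj1_sig y <> proj1_sig t) by (intro E; apply Ny, I01_eq, E). split_Rabs; lra. }
   destruct (archimed_cor1 _ Hr) as [N [HN HN0]].
   exists (pred N). intros V HV Vt. exists t; split; auto. exists y; split; auto.
   rewrite Nat.succ_pred_pos; auto. lra. }
 set (r := / INR (S n)).
 assert (Hr : 0 < r) by (unfold r; apply Rinv_0_lt_compat; rewrite S_INR; pose proof (pos_INR n); lra).
 assert (Hcl : forall x, C n x -> exists y, g y = g x /\ Rabs (proj1_sig y - proj1_sig x) >= r/2).
 { intros x Cx. apply NNPP; intro N1.
   set (K := fun y : I01 => Rabs (proj1_sig y - proj1_sig x) >= r/2).
   assert (HK : closed I01_open K).
   { intros y Hy. exists (r/2 - Rabs (proj1_sig y - proj1_sig x)).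
     split; [unfold K in Hy; lra|]. intros z Hz Kz. unfold K in *. revert Hy Hz Kz; split_Rabs; lra. }
   pose proof (hg _ (closed_im opY hY hH g hg K HK)) as HW.
   destruct I01_top as [_ [Hi _]].
   destruct (Cx (fun t => ~ image g K (g t) /\ Rabs (proj1_sig t - proj1_sig x) < r/2)) as
     [z [[Wz Hz] [y [Ey Hy]]]].
   - apply Hi; [exact HW|apply ball_open].
   - split.
     + intros [y [Ky Ey]]. apply N1. exists y; split; [auto|exact Ky].
     + rewrite Rminus_diag, Rabs_R0; lra.
   - apply Wz. exists y; split; auto. unfold K. fold r in Hy. revert Hy Hz. split_Rabs; lra. }
 set (d' := Rmin d (c + r/4)).
 assert (Hd' : c < d' <= d /\ d' <= c + r/4) by (unfold d'; rmm; lra).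
 assert (Hm : 0 <= (c + d')/2 <= 1) by lra.
 destruct (Hc _ (closed_compl_interval c d')) as [_ [y [[t [_ <-]] Ny]]].
 { split; [intros z _; exact I|]. exists (mk _ Hm); split; [exact I|]. simpl; intro N; apply N; lra. }
 assert (Wt : c < proj1_sig t < d').
 { apply NNPP; intro N. apply Ny. exists t; auto. }
 destruct (Hcl t (HCn t ltac:(lra))) as [y [Ey Hy]].
 apply Ny. exists y; split; auto. intros Wy. revert Hy. split_Rabs; lra.
Qed.

Theorem lemma2p2 (Y : Type) (opY : (Y -> Prop) -> Prop)
  (hY : is_topology opY) (hH : Hausdorff opY)
  (g : I01 -> Y) (hg : continuous I01_open opY g)
  (hsurj : forall y, exists t, g t = y) :
  (arcwise_increasing I01_open g <-> hereditarily_irreducible I01_open g) /\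
  (hereditarily_irreducible I01_open g <-> strongly_irreducible I01_open g) /\
  (strongly_irreducible I01_open g <-> almost_injective I01_open g).
Proof.
  pose proof (a_to_c opY hY hH g hg) as AC.
  pose proof (c_to_d opY hY hH g hg) as CD.
  pose proof (d_to_c g) as DC. pose proof (c_to_b g) as CB. pose proof (b_to_a g) as BA.
  split; [|split]; split; auto.
Qed.
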